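(* Consider $\min f(x)$ s.t. $g(x)\in K$ with $f,g$ twice continuously differentiable and $K\subseteq\mathbb{R}^m$ closed; $C:=g^{-1}(K)$. Let $d\in T_C(\bar x)$ and $\bar x$ be a local optimal solution in direction $d$ with $\nabla f(\bar x)d=0$. Then for every $\lambda\in\mathbb{R}^m$ with $\nabla_xL(\bar x,\lambda)=0$: (i) $\sigma_\Theta(\lambda)\le0$; (ii) $\nabla_{xx}^2L(\bar x,\lambda)(d,d)-\sigma_\Omega(\lambda)=\alpha\ge0$, where $\alpha:=\inf_{w\in T_C^2(\bar x;d)}\big(\nabla f(\bar x)w+\nabla^2f(\bar x)(d,d)\big)$.
   Context: $L(x,\lambda):=f(x)+\langle\lambda,g(x)\rangle$. $\Theta:=\nabla g(\bar x)\big(T_C^{''}(\bar x;d)\big)$ and $\Omega:=\nabla g(\bar x)\big(T_C^2(\bar x;d)\big)+\nabla^2g(\bar x)(d,d)$, where $\nabla^2g(\bar x)(d,d):=(d^T\nabla^2g_i(\bar x)d)_{i=1}^m$. $T_C^2(\bar x;d):=\{w\mid \exists t_k\downarrow 0,\ w_k\to w,\ \bar x+t_kd+\tfrac12 t_k^2w_k\in C\}$; $T_C^{''}(\bar x;d):=\{w\mid \exists (t_k,r_k)\downarrow(0,0),\ w_k\to w,\ t_k/r_k\to0,\ \bar x+t_kd+\tfrac12 t_kr_kw_k\in C\}$. $\sigma_S(\lambda):=\sup_{u\in S}\langle\lambda,u\rangle$, with $\sigma_\emptyset\equiv-\infty$ and $\inf\emptyset=+\infty$. $V_{\rho,\delta}(d):=\{w\in\delta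 B_{\mathbb{R}^n}\mid \|\,\|d\|w-\|w\|d\,\|\le\rho\|w\|\|d\|\}$; $\bar x\in C$ is local optimal in direction $d$ if for some $\rho,\delta>0$, $f(x)\ge f(\bar x)$ for all $x\in C\cap(\bar x+V_{\rho,\delta}(d))$. *)

(* Defs.v *)
From HB Require Import structures.
From mathcomp Require Import all_boot all_order all_algebra.
From mathcomp Require Import all_classical all_reals all_analysis.
Set Implicit Arguments. Unset Strict Implicit. Unset Printing Implicit Defensive.
Import Order.TTheory GRing.Theory Num.Theory.
Import numFieldNormedType.Exports.
Local Open Scope ring_scope.
Local Open Scope classical_set_scope.

Section Defs.
Variable R : realType.

Definition dotv {n} (u v : 'rV[R]_n) : R := (u *m v^T) 0 0.
Definition enorm {n} (v : 'rV[R]_n) : R := Num.sqrt (dotv v v).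

Definition qform {n} (M : 'M[R]_n) (d : 'rV[R]_n) : R := (d *m M *m d^T) 0 0.

Definition has_grad {n} (f : 'rV[R]_n -> R) (G : 'rV[R]_n) (x : 'rV[R]_n) :=
  forall eps : R, 0 < eps -> exists delta : R, 0 < delta /\
    forall y, enorm (y - x) < delta ->
      `|f y - f x - dotv G (y - x)| <= eps * enorm (y - x).

Definition has_jac {n m} (F : 'rV[R]_n -> 'rV[R]_m) (L : 'M[R]_(n, m)) (x : 'rV[R]_n) :=
  forall eps : R, 0 < eps -> exists delta : R, 0 < delta /\
    forall y, enorm (y - x) < delta ->
      enorm (F y - F x - (y - x) *m L) <= eps * enorm (y - x).

Definition C2 {n} (f : 'rV[R]_n -> R) (Df : 'rV[R]_n -> 'rV[R]_n)
  (D2f : 'rV[R]_n -> 'M[R]_n) :=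
  (forall x, has_grad f (Df x) x) /\ (forall x, has_jac Df (D2f x) x) /\
  continuous D2f.

(* g : R^n -> R^m is C^2 with Jacobian (transposed, i.e. grad g(x) w = w *m Jg x)
   and Hessians Hg i of the components g_i *)
Definition C2map {n m} (g : 'rV[R]_n -> 'rV[R]_m) (Jg : 'rV[R]_n -> 'M[R]_(n, m))
  (Hg : 'I_m -> 'rV[R]_n -> 'M[R]_n) :=
  forall i : 'I_m, C2 (fun x => g x 0 i) (fun x => (col i (Jg x))^T) (Hg i).

(* t_k decreasing to 0 in the sense t_k > 0, t_k -> 0 *)
Definition pos_to0 (t : nat -> R) := (forall k, 0 < t k) /\ t @ \oo --> (0 : R).

Definition tangent_cone {n} (C : set 'rV[R]_n) (x : 'rV[R]_n) : set 'rV[R]_n :=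
  [set d | exists (t : nat -> R) (d_ : nat -> 'rV[R]_n),
     pos_to0 t /\ d_ @ \oo --> d /\ forall k, C (x + t k *: d_ k)].

Definition tangent2 {n} (C : set 'rV[R]_n) (x d : 'rV[R]_n) : set 'rV[R]_n :=
  [set w | exists (t : nat -> R) (w_ : nat -> 'rV[R]_n),
     pos_to0 t /\ w_ @ \oo --> w /\
     forall k, C (x + t k *: d + (2^-1 * t k ^+ 2) *: w_ k)].

Definition tangent2_asym {n} (C : set 'rV[R]_n) (x d : 'rV[R]_n) : set 'rV[R]_n :=
  [set w | exists (t r : nat -> R) (w_ : nat -> 'rV[R]_n),
     pos_to0 t /\ pos_to0 r /\ (fun k => t k / r k) @ \oo --> (0 : R) /\
     w_ @ \oo --> w /\
     forall k, C (x + t k *: d + (2^-1 * t k * r k) *: w_ k)].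

(* support function, sigma_emptyset = -oo *)
Definition support_fun {m} (S : set 'rV[R]_m) (lam : 'rV[R]_m) : \bar R :=
  ereal_sup [set (dotv lam u)%:E | u in S].

Definition Vdir {n} (rho delta : R) (d : 'rV[R]_n) : set 'rV[R]_n :=
  [set w | enorm w <= delta /\
     enorm (enorm d *: w - enorm w *: d) <= rho * enorm w * enorm d].

Definition local_opt_dir {n} (f : 'rV[R]_n -> R) (C : set 'rV[R]_n) (xbar d : 'rV[R]_n) :=
  C xbar /\ exists rho delta : R, 0 < rho /\ 0 < delta /\
    forall x, C x -> Vdir rho delta d (x - xbar) -> f xbar <= f x.

End Defs.

(* Main.v *)
Require Import Defs.
From HB Require Import structures.
From mathcomp Require Import all_boot all_order all_algebra.
From mathcomp Require Import all_classical all_reals all_analysis.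
From mathcomp Require Import ring lra.
Import Order.TTheory GRing.Theory Num.Theory.
Import numFieldNormedType.Exports.
Local Open Scope ring_scope.
Local Open Scope classical_set_scope.

Set Implicit Arguments. Unset Strict Implicit.

Section S.
Variable R : realType.
Lemma mul_self_ge0 (x : R) : 0 <= x * x. Proof. by rewrite -expr2 sqr_ge0. Qed.

Lemma invol_sub (c : R) (x : \bar R) : (c%:E - (c%:E - x) = x)%E.
Proof. case: x => [r| |] //=. congr EFin. by rewrite opprB addrC subrK. Qed.

Lemma sup_transl (c : R) (S : set (\bar R)) :
  ereal_sup [set (c%:E - x)%E | x in S] = (c%:E - ereal_inf S)%E.
Proof.
apply/le_anti/andP; split.
  apply/ereal_supP => _ [x Sx <-]; apply: leeB => //.
  exact: ereal_inf_lbound.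
set s := ereal_sup _.
have H : (c%:E - s <= ereal_inf S)%E.
  apply/ereal_infP => x Sx; rewrite -[X in (_ <= X)%E](invol_sub c).
  apply: leeB => //; apply: ereal_sup_ubound; by exists x.
rewrite -[X in (_ <= X)%E](invol_sub c); exact: leeB.
Qed.

Lemma dotvE n (u v : 'rV[R]_n) : dotv u v = \sum_j u 0 j * v 0 j.
Proof. by rewrite /dotv !mxE; apply: eq_bigr => j _; rewrite mxE. Qed.

Lemma qformE n (M : 'M[R]_n) v : qform M v = dotv (v *m M) v.
Proof. by []. Qed.

Lemma dotvC n (u v : 'rV[R]_n) : dotv u v = dotv v u.
Proof. rewrite !dotvE; apply: eq_bigr => j _; exact: mulrC. Qed.

Lemma dotvDl n (u v w : 'rV[R]_n) : dotv (u + v) w = dotv u w + dotv v w.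
Proof. rewrite !dotvE -big_split; apply: eq_bigr => j _; by rewrite mxE mulrDl. Qed.

Lemma dotvDr n (u v w : 'rV[R]_n) : dotv w (u + v) = dotv w u + dotv w v.
Proof. by rewrite dotvC dotvDl !(dotvC w). Qed.

Lemma dotvZl n a (u w : 'rV[R]_n) : dotv (a *: u) w = a * dotv u w.
Proof. rewrite !dotvE mulr_sumr; apply: eq_bigr => j _; by rewrite mxE mulrA. Qed.

Lemma dotvZr n a (u w : 'rV[R]_n) : dotv w (a *: u) = a * dotv w u.
Proof. by rewrite dotvC dotvZl dotvC. Qed.

Lemma dotvNl n (u w : 'rV[R]_n) : dotv (- u) w = - dotv u w.
Proof. by rewrite -scaleN1r dotvZl mulN1r. Qed.

Lemma dotvBl n (u v w : 'rV[R]_n) : dotv (u - v) w = dotv u w - dotv v w.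
Proof. by rewrite dotvDl dotvNl. Qed.

Lemma dotv0l n (w : 'rV[R]_n) : dotv 0 w = 0.
Proof. by rewrite dotvE big1 // => j _; rewrite mxE mul0r. Qed.

Lemma dotvv_ge0 n (u : 'rV[R]_n) : 0 <= dotv u u.
Proof. rewrite dotvE; apply: sumr_ge0 => j _; exact: mul_self_ge0. Qed.

Lemma enorm_ge0 n (u : 'rV[R]_n) : 0 <= enorm u.
Proof. exact: sqrtr_ge0. Qed.

Lemma enorm_sqr n (u : 'rV[R]_n) : enorm u ^+ 2 = dotv u u.
Proof. by rewrite /enorm sqr_sqrtr // dotvv_ge0. Qed.

Lemma enormZ n a (u : 'rV[R]_n) : enorm (a *: u) = `|a| * enorm u.
Proof.
by rewrite /enorm dotvZl dotvZr mulrA sqrtrM ?mul_self_ge0 // -expr2 sqrtr_sqr.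
Qed.

Lemma enorm0 n : enorm (0 : 'rV[R]_n) = 0.
Proof. by rewrite /enorm dotv0l sqrtr0. Qed.

Lemma dotv_mulmx n m (u : 'rV[R]_n) (M : 'M[R]_(n,m)) (w : 'rV[R]_m) :
  dotv (u *m M) w = dotv u (w *m M^T).
Proof. by rewrite /dotv trmx_mul trmxK mulmxA. Qed.

Lemma CS n (u v : 'rV[R]_n) : `|dotv u v| <= enorm u * enorm v.
Proof.
have key : dotv u v ^+ 2 <= dotv u u * dotv v v.
  have [A0|Apos] := eqVneq (dotv u u) 0.
    have u0 : forall j, u 0 j = 0.
      move=> j; move: A0; rewrite dotvE => /psumr_eq0P H.
      have /eqP := H (fun i _ => mul_self_ge0 _) j isT.
      by rewrite mulf_eq0 orbb => /eqP.
    rewrite A0 mul0r dotvE big1 ?expr0n //= => j _; by rewrite u0 mul0r.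
  have Ap : 0 < dotv u u by rewrite lt_def Apos dotvv_ge0.
  have := dotvv_ge0 ((- (dotv u v / dotv u u)) *: u + v).
  rewrite !(dotvDl, dotvDr, dotvZl, dotvZr) (dotvC v u).
  set A := dotv u u; set B := dotv u v; set Cc := dotv v v => H.
  have : 0 <= A * (Cc - B^+2 / A).
    apply: mulr_ge0; first exact: ltW.
    apply: le_trans H _; rewrite le_eqVlt; apply/orP; left; apply/eqP.
    by field.
  rewrite mulrBr mulrCA divff // mulr1 subr_ge0 mulrC => //.
rewrite -(sqrtr_sqr (dotv u v)) /enorm -sqrtrM ?dotvv_ge0 //.
by rewrite ler_sqrt // mulr_ge0 // dotvv_ge0.
Qed.
End S.

Section B.
Variable R : realType.

Lemma cvg_sumR (I : Type) (r : seq I) (f : I -> nat -> R) (a : I -> R) :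
  (forall i, f i @ \oo --> a i) ->
  (fun k => \sum_(i <- r) f i k) @ \oo --> \sum_(i <- r) a i.
Proof. move=> H; apply: cvg_big => //; exact: add_continuous. Qed.

Definition Ecvg n (v : nat -> 'rV[R]_n) (a : 'rV[R]_n) :=
  forall j, (fun k => v k 0 j) @ \oo --> a 0 j.

Lemma EcvgP n (v : nat -> 'rV[R]_n) a : v @ \oo --> a -> Ecvg v a.
Proof.
move=> H j.
exact: (@continuous_cvg _ _ _ _ _ v (fun M : 'rV[R]_n => M 0 j) a
  (@coord_continuous R 1 n 0 j a) H).
Qed.

Lemma Ecvg_cst n (a : 'rV[R]_n) : Ecvg (fun=> a) a.
Proof. move=> j; exact: cvg_cst. Qed.

Lemma cvg_dotv n (v u : nat -> 'rV[R]_n) a b :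
  Ecvg v a -> Ecvg u b -> (fun k => dotv (v k) (u k)) @ \oo --> dotv a b.
Proof.
move=> Hv Hu; rewrite dotvE.
have -> : (fun k => dotv (v k) (u k)) = (fun k => \sum_j v k 0 j * u k 0 j).
  by apply/funext => k; rewrite dotvE.
apply: cvg_sumR => j; exact: cvgM.
Qed.

Lemma Ecvg_mulmx n m (v : nat -> 'rV[R]_n) a (M : 'M[R]_(n, m)) :
  Ecvg v a -> Ecvg (fun k => v k *m M) (a *m M).
Proof.
move=> Hv j; rewrite mxE.
have -> : (fun k => (v k *m M) 0 j) = (fun k => \sum_i v k 0 i * M i j).
  by apply/funext => k; rewrite mxE.
apply: cvg_sumR => i; apply: cvgM => //; exact: cvg_cst.
Qed.

Lemma Ecvg_lin n (v u : nat -> 'rV[R]_n) a b (s s2 : nat -> R) (c c2 : R) :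
  Ecvg v a -> Ecvg u b -> s @ \oo --> c -> s2 @ \oo --> c2 ->
  Ecvg (fun k => s k *: v k + s2 k *: u k) (c *: a + c2 *: b).
Proof.
move=> Hv Hu Hs Hs2 j; rewrite !mxE.
have -> : (fun k => (s k *: v k + s2 k *: u k) 0 j) =
  (fun k => s k * v k 0 j + s2 k * u k 0 j).
  by apply/funext => k; rewrite !mxE.
by apply: cvgD; apply: cvgM.
Qed.

Lemma cvg_enorm n (v : nat -> 'rV[R]_n) a :
  Ecvg v a -> (fun k => enorm (v k)) @ \oo --> enorm a.
Proof.
move=> Hv; rewrite /enorm.
exact: (@continuous_cvg _ _ _ _ _ (fun k => dotv (v k) (v k)) Num.sqrt _
  (@sqrt_continuous R _) (cvg_dotv Hv Hv)).
Qed.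
End B.

Section C.
Variable R : realType.

Lemma is_derive_eps (phi : R -> R) s L :
  (forall eps, 0 < eps -> exists del, 0 < del /\ forall u, `|u| < del ->
     `|phi (s + u) - phi s - u * L| <= eps * `|u|) ->
  is_derive s 1 phi L.
Proof.
move=> H.
have Hc : (fun h : R => h^-1 *: ((phi \o shift s) (h *: 1) - phi s)) @ 0^' --> L.
  apply/cvgrPdist_le => e e0; have [del [del0 Hd]] := H e e0.
  near=> h.
  have hn0 : h != 0 by near: h; exact: nbhs_dnbhs_neq.
  have hd : `|h| < del by near: h; exact: dnbhs0_lt.
  rewrite /= /shift /= [h *: 1]mulr1 [h + s]addrC.
  rewrite -[_ *: _]/(_ * _).
  have -> : L - h^-1 * (phi (s + h) - phi s) = - h^-1 * (phi (s + h) - phi s - h * L).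
    by field.
  rewrite normrM normrN normfV ler_pdivrMl ?normr_gt0 // mulrC.
  rewrite (mulrC L) (mulrC `|h|); exact: Hd.
apply: DeriveDef; first by apply/cvg_ex; exists L.
exact: cvg_lim Hc.
Unshelve. all: by end_near. Qed.
End C.

Section D.
Variable R : realType.

Lemma taylor2 n (f : 'rV[R]_n -> R) Df D2f x : C2 f Df D2f ->
  forall eps, 0 < eps -> exists del, 0 < del /\ forall h, enorm h < del ->
  `|f (x + h) - f x - dotv (Df x) h - 2^-1 * qform (D2f x) h| <= eps * enorm h ^+ 2.
Proof.
move=> [Hg [Hj _]] eps e0; have [del [d0 Hd]] := Hj x eps e0.
exists del; split => // h hlt.
set G := Df x; set H := D2f x; set q := qform H h; set c := dotv G h.
have hge0 := enorm_ge0 h.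
pose rho := fun s : R => f (x + s *: h) - s * c - 2^-1 * s ^+ 2 * q.
pose drho := fun s : R => dotv (Df (x + s *: h)) h - c - s * q.
have Der : forall s : R, is_derive s (1:R) rho (drho s).
  move=> s; apply: is_derive_eps => e e0'.
  set y := x + s *: h.
  have ep : 0 < e / 2 / (enorm h + 1) by rewrite !divr_gt0 // ltr_wpDl.
  have [d1 [d10 Hd1]] := Hg y _ ep.
  exists (Num.min (d1 / (enorm h + 1)) (e / 2 / (`|q| + 1))); split.
    by rewrite lt_min !divr_gt0 // ltr_wpDl.
  move=> u; rewrite lt_min => /andP [u1 u2].
  have E : rho (s + u) - rho s - u * drho s =
     (f (y + u *: h) - f y - dotv (Df y) (u *: h)) - 2^-1 * u ^+ 2 * q.
    by rewrite /rho /drho /y scalerDl addrA dotvZr; field.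
  rewrite E; apply: le_trans (ler_normB _ _) _.
  have yy : y + u *: h - y = u *: h by rewrite addrC addKr.
  have h1 : enorm (y + u *: h - y) < d1.
    rewrite yy enormZ; apply: le_lt_trans (_ : `|u| * (enorm h + 1) < d1).
      by rewrite ler_wpM2l // lerDl.
    by rewrite -ltr_pdivlMr // ltr_wpDl.
  have HA := Hd1 _ h1; rewrite yy enormZ in HA.
  have nu := normr_ge0 u; have nq := normr_ge0 q.
  have B1 : `|f (y + u *: h) - f y - dotv (Df y) (u *: h)| <= e / 2 * `|u|.
    apply: le_trans HA _.
    have -> : e / 2 / (enorm h + 1) * (`|u| * enorm h) =
      e / 2 * `|u| * (enorm h / (enorm h + 1)).
      by field; rewrite gt_eqF // ltr_wpDl.
    apply: ler_piMr; first by rewrite mulr_ge0 // divr_ge0 // ltW.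
    by rewrite ler_pdivrMr ?ltr_wpDl // mul1r lerDl.
  have uq : `|u| * `|q| <= e / 2.
    have : `|u| * (`|q| + 1) < e / 2 by rewrite -ltr_pdivlMr // ltr_wpDl.
    rewrite mulrDr mulr1 => H0; apply: le_trans (ltW H0); by rewrite lerDl.
  have B2 : `|2^-1 * u ^+ 2 * q| <= e / 2 * `|u|.
    rewrite expr2 !normrM normfV normr_nat.
    have -> : 2^-1 * (`|u| * `|u|) * `|q| = 2^-1 * `|u| * (`|u| * `|q|) by ring.
    rewrite [X in _ <= X]mulrC; apply: ler_pM; rewrite ?mulr_ge0 //.
    by rewrite ler_piMl // invf_le1 // ler1n.
  have : e / 2 * `|u| + e / 2 * `|u| = e * `|u| by field.
  move=> <-; exact: lerD.
have cont : {within `[0, 1], continuous rho}.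
  apply: derivable_within_continuous => s _; exact: (@ex_derive _ _ _ _ _ _ _ (Der s)).
have [c0 c0in Hm] := MVT ltr01 (fun s _ => Der s) cont.
have rho1 : rho 1 - rho 0 = f (x + h) - f x - c - 2^-1 * q.
  by rewrite /rho scale1r scale0r addr0; field.
rewrite -/c -/q -rho1 Hm subr0 mulr1.
have c0p : 0 < c0 by move: c0in; rewrite in_itv /= => /andP [].
have c01 : c0 < 1 by move: c0in; rewrite in_itv /= => /andP [].
have yy : x + c0 *: h - x = c0 *: h by rewrite addrC addKr.
have hl : enorm (x + c0 *: h - x) < del.
  rewrite yy enormZ gtr0_norm //; apply: le_lt_trans hlt.
  by rewrite ler_piMl // ltW.
have HH := Hd _ hl; rewrite yy in HH.
have -> : drho c0 = dotv (Df (x + c0 *: h) - G - (c0 *: h) *m H) h.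
  by rewrite /drho !dotvBl -scalemxAl dotvZl.
apply: le_trans (CS _ _) _.
apply: le_trans (ler_wpM2r hge0 HH) _.
rewrite enormZ gtr0_norm // expr2 mulrA -!mulrA; apply: ler_wpM2l; first exact: ltW.
by rewrite ler_piMl ?mulr_ge0 // ltW.
Qed.
End D.

Section E.
Variable R : realType.

Lemma opt_seq n (f : 'rV[R]_n -> R) (C : set 'rV[R]_n) xbar d
  (t : nat -> R) (v : nat -> 'rV[R]_n) :
  local_opt_dir f C xbar d -> pos_to0 t -> Ecvg v d ->
  (forall k, C (xbar + t k *: v k)) ->
  \forall k \near \oo, f xbar <= f (xbar + t k *: v k).
Proof.
move=> [_ [rho [del [rp [dp Hf]]]]] [tp t0] Hv HC.
have Hnv := cvg_enorm Hv.
have P1 : \forall k \near \oo, t k * enorm (v k) < del.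
  have H : (fun k => t k * enorm (v k)) @ \oo --> 0.
    by rewrite -(mul0r (enorm d)); apply: cvgM.
  exact: (@cvgr_lt R nat \oo _ _ _ H del dp).
have P2 : \forall k \near \oo,
    enorm (enorm d *: v k - enorm (v k) *: d) <= rho * enorm (v k) * enorm d.
  have [d0|dpos] := eqVneq (enorm d) 0.
    near=> k; rewrite d0 mulr0 scale0r sub0r -scaleNr enormZ d0 mulr0 //.
  have dgt : 0 < enorm d by rewrite lt_def dpos enorm_ge0.
  have Hw : Ecvg (fun k => enorm d *: v k + (- enorm (v k)) *: d)
                 (enorm d *: d + (- enorm d) *: d).
    apply: Ecvg_lin => //; [exact: Ecvg_cst | exact: cvg_cst | exact: cvgN].
  have Hl := cvg_enorm Hw.
  rewrite scaleNr subrr enorm0 in Hl.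
  have Hr : (fun k => rho * enorm (v k) * enorm d) @ \oo --> rho * enorm d * enorm d.
    by apply: cvgM; [apply: cvgM => //; exact: cvg_cst | exact: cvg_cst].
  have Hdiff : (fun k => rho * enorm (v k) * enorm d -
       enorm (enorm d *: v k + - enorm (v k) *: d)) @ \oo --> rho * enorm d * enorm d.
    by rewrite -[X in _ --> X]subr0; apply: cvgB.
  have := @cvgr_gt R nat \oo _ _ _ Hdiff 0 (mulr_gt0 (mulr_gt0 rp dgt) dgt).
  move=> H0; near=> k.
  have : 0 < rho * enorm (v k) * enorm d -
       enorm (enorm d *: v k + - enorm (v k) *: d) by near: k; exact: H0.
  by rewrite subr_gt0 scaleNr => /ltW.
near=> k.
apply: Hf; first exact: HC.
rewrite /Vdir /= [xbar + _]addrC addrK enormZ gtr0_norm //; split.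
  by apply: ltW; near: k.
have -> : enorm d *: (t k *: v k) - t k * enorm (v k) *: d =
   t k *: (enorm d *: v k - enorm (v k) *: d).
  by rewrite scalerBr !scalerA mulrC -scalerA.
rewrite enormZ gtr0_norm //.
have -> : rho * (t k * enorm (v k)) * enorm d = t k * (rho * enorm (v k) * enorm d)
  by rewrite -!mulrA mulrCA.
apply: ler_wpM2l; first exact: ltW.
by near: k.
Unshelve. all: by end_near. Qed.
End E.

Section F.
Variable R : realType.

Lemma ge0_of_cvg (s : nat -> R) l : s @ \oo --> l ->
  (\forall k \near \oo, 0 <= s k) -> 0 <= l.
Proof.
move=> H H0; rewrite -(cvg_lim _ H) //; apply: limr_ge => //.
by apply/cvg_ex; exists l.
Qed.

Lemma qformZ n (M : 'M[R]_n) a v : qform M (a *: v) = a ^+ 2 * qform M v.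
Proof. by rewrite !qformE -scalemxAl dotvZl dotvZr mulrA expr2. Qed.

Lemma taylor_seq n (f : 'rV[R]_n -> R) Df D2f x (t : nat -> R) (v : nat -> 'rV[R]_n) d eps :
  C2 f Df D2f -> pos_to0 t -> Ecvg v d -> 0 < eps ->
  \forall k \near \oo, f (x + t k *: v k) - f x <=
     t k * dotv (Df x) (v k) + t k ^+ 2 * (2^-1 * qform (D2f x) (v k) + eps * enorm (v k) ^+ 2).
Proof.
move=> HC [tp t0] Hv e0.
have [del [dp Hd]] := taylor2 x HC e0.
have H : (fun k => t k * enorm (v k)) @ \oo --> 0.
  by rewrite -(mul0r (enorm d)); apply: cvgM => //; exact: cvg_enorm.
have := @cvgr_lt R nat \oo _ _ _ H del dp.
move=> H1; near=> k.
have hk : t k * enorm (v k) < del by near: k; exact: H1.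
have hk' : enorm (t k *: v k) < del by rewrite enormZ gtr0_norm.
have := Hd _ hk'. rewrite dotvZr qformZ enormZ (gtr0_norm (tp k)) ler_norml => /andP [_ Hb].
rewrite -subr_le0; rewrite -subr_le0 in Hb; apply: le_trans Hb; rewrite le_eqVlt; apply/orP; left.
apply/eqP; rewrite !exprMn; field.
Unshelve. all: by end_near. Qed.
End F.
Section G.
Variable R : realType.

Lemma part_i n (f : 'rV[R]_n -> R) Df D2f (C : set 'rV[R]_n) xbar d w :
  C2 f Df D2f -> local_opt_dir f C xbar d -> dotv (Df xbar) d = 0 ->
  tangent2_asym C xbar d w -> 0 <= dotv (Df xbar) w.
Proof.
move=> HC Hopt Gd [t [r [w_ [Pt [Pr [tr [Hw HCk]]]]]]].
pose v k := (1:R) *: d + (2^-1 * r k) *: w_ k.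
have Hv : Ecvg v d.
  have Hr2 : (fun k => 2^-1 * r k) @ \oo --> (0:R).
    rewrite -(mulr0 (2^-1 : R)); apply: cvgM; [exact: cvg_cst | exact: Pr.2].
  have H := Ecvg_lin (@Ecvg_cst R n d) (EcvgP Hw) (@cvg_cst _ (1:R) _ _ _) Hr2.
  have E : (1:R) *: d + 0 *: w = d by rewrite scale1r scale0r addr0.
  rewrite E in H. exact: H.
have HCv : forall k, C (xbar + t k *: v k).
  move=> k; have -> : xbar + t k *: v k = xbar + t k *: d + (2^-1 * t k * r k) *: w_ k.
    by rewrite /v scalerDr scale1r !scalerA addrA mulrCA mulrA.
  exact: HCk.
have E1 := opt_seq Hopt Pt Hv HCv.
have E2 := taylor_seq xbar HC Pt Hv (@ltr01 R).
pose s k := dotv (Df xbar) (w_ k) +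
   t k / r k * (qform (D2f xbar) (v k) + 2 * dotv (v k) (v k)).
have Hs : s @ \oo --> dotv (Df xbar) w +
    0 * (qform (D2f xbar) d + 2 * dotv d d).
  apply: cvgD; first exact: (cvg_dotv (@Ecvg_cst R n (Df xbar)) (EcvgP Hw)).
  apply: cvgM; first exact: tr.
  apply: cvgD; first exact: (cvg_dotv (@Ecvg_mulmx R n n v d (D2f xbar) Hv) Hv).
  apply: cvgM; [exact: cvg_cst | exact: (cvg_dotv Hv Hv)].
rewrite mul0r addr0 in Hs; apply: (ge0_of_cvg Hs).
near=> k.
have e1 : f xbar <= f (xbar + t k *: v k) by near: k; exact: E1.
have e2 : f (xbar + t k *: v k) - f xbar <= t k * dotv (Df xbar) (v k) +
     t k ^+ 2 * (2^-1 * qform (D2f xbar) (v k) + 1 * enorm (v k) ^+ 2).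
  by near: k; exact: E2.
have tp := Pt.1 k; have rp := Pr.1 k.
have Gv : dotv (Df xbar) (v k) = 2^-1 * r k * dotv (Df xbar) (w_ k).
  by rewrite /v dotvDr !dotvZr Gd mulr0 add0r.
rewrite Gv enorm_sqr in e2.
have : 0 <= (2^-1 * t k * r k) * s k.
  have -> : (2^-1 * t k * r k) * s k = t k * (2^-1 * r k * dotv (Df xbar) (w_ k)) +
     t k ^+ 2 * (2^-1 * qform (D2f xbar) (v k) + 1 * dotv (v k) (v k)).
    by rewrite /s; field; rewrite gt_eqF.
  apply: le_trans e2; by rewrite subr_ge0.
by rewrite pmulr_rge0 // !mulr_gt0.
Unshelve. all: by end_near. Qed.
End G.
Section H.
Variable R : realType.

Lemma part_iii n (f : 'rV[R]_n -> R) Df D2f (C : set 'rV[R]_n) xbar d w :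
  C2 f Df D2f -> local_opt_dir f C xbar d -> dotv (Df xbar) d = 0 ->
  tangent2 C xbar d w -> 0 <= dotv (Df xbar) w + qform (D2f xbar) d.
Proof.
move=> HC Hopt Gd [t [w_ [Pt [Hw HCk]]]].
pose v k := (1:R) *: d + (2^-1 * t k) *: w_ k.
have Hv : Ecvg v d.
  have Hr2 : (fun k => 2^-1 * t k) @ \oo --> (0:R).
    rewrite -(mulr0 (2^-1 : R)); apply: cvgM; [exact: cvg_cst | exact: Pt.2].
  have H := Ecvg_lin (@Ecvg_cst R n d) (EcvgP Hw) (@cvg_cst _ (1:R) _ _ _) Hr2.
  have E : (1:R) *: d + 0 *: w = d by rewrite scale1r scale0r addr0.
  rewrite E in H; exact: H.
have HCv : forall k, C (xbar + t k *: v k).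
  move=> k; have -> : xbar + t k *: v k = xbar + t k *: d + (2^-1 * t k ^+ 2) *: w_ k.
    by rewrite /v scalerDr scale1r !scalerA addrA mulrCA expr2.
  exact: HCk.
have E1 := opt_seq Hopt Pt Hv HCv.
set A := dotv (Df xbar) w + qform (D2f xbar) d.
set D := dotv d d.
have D0 : 0 <= D := dotvv_ge0 d.
suff key : forall eps, 0 < eps -> 0 <= A + 2 * eps * D.
  apply/ler_addgt0Pr => e ep.
  have epos : 0 < e / (2 * D + 1) by rewrite divr_gt0 // ltr_wpDl // mulr_ge0.
  have := key _ epos; move/le_trans; apply.
  rewrite lerD2l.
  have -> : 2 * (e / (2 * D + 1)) * D = e * (2 * D / (2 * D + 1)).
    by field; rewrite gt_eqF // ltr_wpDl // mulr_ge0.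
  apply: ler_piMr; first exact: ltW.
  by rewrite ler_pdivrMr ?ltr_wpDl ?mulr_ge0 // mul1r lerDl.
move=> eps e0.
have E2 := taylor_seq xbar HC Pt Hv e0.
pose s k := dotv (Df xbar) (w_ k) + qform (D2f xbar) (v k) + 2 * eps * dotv (v k) (v k).
have Hs : s @ \oo --> A + 2 * eps * D.
  apply: cvgD; first apply: cvgD.
  - exact: (cvg_dotv (@Ecvg_cst R n (Df xbar)) (EcvgP Hw)).
  - exact: (cvg_dotv (@Ecvg_mulmx R n n v d (D2f xbar) Hv) Hv).
  - apply: cvgM; [exact: cvg_cst | exact: (cvg_dotv Hv Hv)].
apply: (ge0_of_cvg Hs).
near=> k.
have e1 : f xbar <= f (xbar + t k *: v k) by near: k; exact: E1.
have e2 : f (xbar + t k *: v k) - f xbar <= t k * dotv (Df xbar) (v k) +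
     t k ^+ 2 * (2^-1 * qform (D2f xbar) (v k) + eps * enorm (v k) ^+ 2).
  by near: k; exact: E2.
have tp := Pt.1 k.
have Gv : dotv (Df xbar) (v k) = 2^-1 * t k * dotv (Df xbar) (w_ k).
  by rewrite /v dotvDr !dotvZr Gd mulr0 add0r.
rewrite Gv enorm_sqr in e2.
have : 0 <= (2^-1 * t k ^+ 2) * s k.
  have -> : (2^-1 * t k ^+ 2) * s k = t k * (2^-1 * t k * dotv (Df xbar) (w_ k)) +
     t k ^+ 2 * (2^-1 * qform (D2f xbar) (v k) + eps * dotv (v k) (v k)).
    by rewrite /s; field.
  apply: le_trans e2; by rewrite subr_ge0.
by rewrite pmulr_rge0 // mulr_gt0 // exprn_gt0.
Unshelve. all: by end_near. Qed.
End H.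

Unset Implicit Arguments.
Theorem theorem4p2 (R : realType) (n m : nat)
  (f : 'rV[R]_n -> R) (gradf : 'rV[R]_n -> 'rV[R]_n) (hessf : 'rV[R]_n -> 'M[R]_n)
  (g : 'rV[R]_n -> 'rV[R]_m) (Jg : 'rV[R]_n -> 'M[R]_(n, m))
  (Hg : 'I_m -> 'rV[R]_n -> 'M[R]_n)
  (K : set 'rV[R]_m) (xbar d : 'rV[R]_n) :
  C2 f gradf hessf ->
  C2map g Jg Hg ->
  closed K ->
  let C := g @^-1` K in
  tangent_cone C xbar d ->
  local_opt_dir f C xbar d ->
  dotv (gradf xbar) d = 0 ->
  forall lam : 'rV[R]_m,
    gradf xbar + lam *m (Jg xbar)^T = 0 ->
    let Theta := [set w *m Jg xbar | w in tangent2_asym C xbar d] in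
    let Omega := [set w *m Jg xbar + \row_i qform (Hg i xbar) d
                  | w in tangent2 C xbar d] in
    let alpha := ereal_inf [set (dotv (gradf xbar) w + qform (hessf xbar) d)%:E
                            | w in tangent2 C xbar d] in
    (support_fun Theta lam <= 0)%E /\
    ((qform (hessf xbar) d + \sum_(i < m) lam 0 i * qform (Hg i xbar) d)%:E
       - support_fun Omega lam = alpha)%E /\
    (0 <= alpha)%E.
Proof.
move=> HC2 _ _ C _ Hopt Gd lam Hlam Theta Omega alpha.
have HL : lam *m (Jg xbar)^T = - gradf xbar.
  by apply/eqP; rewrite -addr_eq0 addrC Hlam.
have Hdot : forall w, dotv lam (w *m Jg xbar) = - dotv (gradf xbar) w.
  by move=> w; rewrite dotvC dotv_mulmx HL dotvC dotvNl.
split.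
  apply/ereal_supP => _ [u [w Hw <-] <-]; rewrite lee_fin Hdot oppr_le0.
  exact: part_i HC2 Hopt Gd Hw.
split; last first.
  apply/ereal_infP => _ [w Hw <-]; rewrite lee_fin.
  exact: part_iii HC2 Hopt Gd Hw.
set c := qform (hessf xbar) d + \sum_(i < m) lam 0 i * qform (Hg i xbar) d.
have Hrow : forall w, dotv lam (w *m Jg xbar + \row_i qform (Hg i xbar) d) =
    c - (dotv (gradf xbar) w + qform (hessf xbar) d).
  move=> w; rewrite dotvC dotvDl !(dotvC _ lam) Hdot /c (dotvE lam).
  have -> : \sum_j lam 0 j * (\row_i qform (Hg i xbar) d) 0 j =
     \sum_(i < m) lam 0 i * qform (Hg i xbar) d.
    by apply: eq_bigr => j _; rewrite mxE.
  by ring.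
have -> : support_fun Omega lam =
    ereal_sup [set (c%:E - x)%E | x in
      [set (dotv (gradf xbar) w + qform (hessf xbar) d)%:E | w in tangent2 C xbar d]].
  rewrite /support_fun; congr ereal_sup; apply/seteqP; split => y.
    move=> [u [w Hw <-] <-].
    exists ((dotv (gradf xbar) w + qform (hessf xbar) d)%:E); first by exists w.
    by rewrite Hrow EFinB.
  move=> [x [w Hw <-] <-].
  exists (w *m Jg xbar + \row_i qform (Hg i xbar) d); first by exists w.
  by rewrite Hrow EFinB.
by rewrite sup_transl invol_sub.
Qed.
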